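(* Let $\kappa$ be a regular cardinal. A $\kappa$-Kurepa tree exists if and only if there exists a $(\kappa,\kappa)$-connected graph of size $\kappa$ which has a $\kappa$-Kurepa minor family of size at least $\kappa^+$.
   Context: A tree is a poset in which the set of predecessors of each element is well-ordered; the $\alpha$-th level is the set of nodes whose set of predecessors has order type $\alpha$, and the height of the tree is the least $\alpha$ with empty $\alpha$-th level. A branch is a maximal chain. A $\kappa$-Kurepa tree is a tree of height $\kappa$ with at least $\kappa^+$ different branches (of length $\kappa$) and all levels of size less than $\kappa$. A graph is a pair $(V,E)$ with $E\subseteq[V]^2$; its size is $|V|$. For infinite cardinals $\kappa,\lambda$, a graph is $(\kappa,\lambda)$-connected if after the removal of any set of fewer than $\kappa$ vertices, the number of connected components of the remaining graph is non-zero and less than $\lambda$. A $K_\kappa$ minor of $G$ is a family of $\kappa$ pairwise disjoint non-empty vertex sets of $G$, each inducing a connected subgraph, such that any two of them are joined by an edge of $G$; we identify it with the union of its sets when speaking about separation. For vertex sets $X,Y,S$, $S$ separates $X$ from $Y$ in $G$ if after removing $S$, $X\setminus S$ and $Y\setminus S$ lie in different components. A family $\{W_\alpha:\alpha<\lambda\}$ of $K_\kappa$ minors of $G$ is a $\kappa$-Kurepa minor family of size $\lambda$ if for all $\alpha\neq\beta$ some set of fewer than $\kappa$ vertices separates $W_\alpha$ from $W_\beta$ in $G$. *)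

(* Defs.v *)
(* Sets are predicates X : T -> Prop; cardinal comparisons
   are via injections/bijections (classical, with choice, this is the
   usual cardinal order). *)
From Stdlib Require Import Relations Relation_Operators Wellfounded.

Definition inj_le (A B : Type) : Prop :=
  exists f : A -> B, forall x y, f x = f y -> x = y.

Definition card_lt (A B : Type) : Prop := inj_le A B /\ ~ inj_le B A.

Definition equipotent (A B : Type) : Prop :=
  exists (f : A -> B) (g : B -> A),
    (forall x, g (f x) = x) /\ (forall y, f (g y) = y).

Definition ord_iso (A : Type) (ra : A -> A -> Prop)
                   (B : Type) (rb : B -> B -> Prop) : Prop :=
  exists (f : A -> B) (g : B -> A),
    (forall x, g (f x) = x) /\ (forall y, f (g y) = y) /\
    (forall x y, ra x y <-> rb (f x) (f y)).

Definition sub_rel {T : Type} (r : T -> T -> Prop) (P : T -> Prop)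
  : {x | P x} -> {x | P x} -> Prop :=
  fun x y => r (proj1_sig x) (proj1_sig y).

Definition strict_well_order (K : Type) (lt : K -> K -> Prop) : Prop :=
  (forall a, ~ lt a a) /\
  (forall a b c, lt a b -> lt b c -> lt a c) /\
  (forall a b, lt a b \/ a = b \/ lt b a) /\
  well_founded lt.

(** (K, lt) is (the well-order of) a regular infinite cardinal kappa:
    an infinite initial ordinal (every proper initial segment has
    smaller cardinality) such that every subset of size < kappa is
    bounded (cofinality kappa). *)
Definition regular_cardinal (K : Type) (lt : K -> K -> Prop) : Prop :=
  strict_well_order K lt /\
  inj_le nat K /\
  (forall a : K, card_lt {b | lt b a} K) /\
  (forall A : K -> Prop, card_lt {a | A a} K ->
     exists b, forall a, A a -> lt a b).

Definition well_ordered_set {T : Type} (lt : T -> T -> Prop) (P : T -> Prop) : Prop :=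
  (forall x y, P x -> P y -> x = y \/ lt x y \/ lt y x) /\
  (forall Q : T -> Prop, (forall x, Q x -> P x) -> (exists x, Q x) ->
     exists m, Q m /\ forall x, Q x -> x = m \/ lt m x).

Definition is_tree (T : Type) (lt : T -> T -> Prop) : Prop :=
  (forall a, ~ lt a a) /\
  (forall a b c, lt a b -> lt b c -> lt a c) /\
  (forall t, well_ordered_set lt (fun s => lt s t)).

(** t lies on level alpha (alpha an element of K, i.e. an ordinal < kappa):
    its predecessor set has order type alpha. *)
Definition on_level {T : Type} (lt : T -> T -> Prop) {K : Type} (ltK : K -> K -> Prop)
  (a : K) (t : T) : Prop :=
  ord_iso {s | lt s t} (sub_rel lt (fun s => lt s t))
          {b | ltK b a} (sub_rel ltK (fun b => ltK b a)).

Definition on_level_kappa {T : Type} (lt : T -> T -> Prop) (K : Type) (ltK : K -> K -> Prop)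
  (t : T) : Prop :=
  ord_iso {s | lt s t} (sub_rel lt (fun s => lt s t)) K ltK.

Definition is_chain {T : Type} (lt : T -> T -> Prop) (C : T -> Prop) : Prop :=
  forall x y, C x -> C y -> x = y \/ lt x y \/ lt y x.

Definition is_branch {T : Type} (lt : T -> T -> Prop) (C : T -> Prop) : Prop :=
  is_chain lt C /\
  forall D, is_chain lt D -> (forall x, C x -> D x) -> forall x, D x -> C x.

Definition kurepa_tree (K : Type) (ltK : K -> K -> Prop)
  (T : Type) (lt : T -> T -> Prop) : Prop :=
  is_tree T lt /\
  (* height kappa: levels alpha < kappa nonempty, level kappa empty *)
  (forall a : K, exists t, on_level lt ltK a t) /\
  (forall t, ~ on_level_kappa lt K ltK t) /\
  (forall a : K, card_lt {t | on_level lt ltK a t} K) /\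
  (* at least kappa^+ branches of length kappa *)
  ~ inj_le {C : T -> Prop | is_branch lt C /\
                             ord_iso {x | C x} (sub_rel lt C) K ltK} K.

Definition simple_graph (V : Type) (E : V -> V -> Prop) : Prop :=
  (forall u v, E u v -> E v u) /\ (forall v, ~ E v v).

Definition rel_in {V : Type} (E : V -> V -> Prop) (X : V -> Prop) : V -> V -> Prop :=
  fun a b => X a /\ X b /\ E a b.

Definition connected_in {V : Type} (E : V -> V -> Prop) (X : V -> Prop) (u v : V) : Prop :=
  clos_refl_trans V (rel_in E X) u v.

Definition components {V : Type} (E : V -> V -> Prop) (S : V -> Prop) : Type :=
  {C : V -> Prop | exists v, ~ S v /\
     C = (fun u => ~ S u /\ connected_in E (fun w => ~ S w) v u)}.

Definition kl_connected (K L : Type) (V : Type) (E : V -> V -> Prop) : Prop :=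
  forall S : V -> Prop, card_lt {v | S v} K ->
    inhabited (components E S) /\ card_lt (components E S) L.

Definition K_minor (K : Type) {V : Type} (E : V -> V -> Prop) (W : K -> V -> Prop) : Prop :=
  (forall a b, a <> b -> forall v, ~ (W a v /\ W b v)) /\
  (forall a, exists v, W a v) /\
  (forall a u v, W a u -> W a v -> connected_in E (W a) u v) /\
  (forall a b, a <> b -> exists u v, W a u /\ W b v /\ E u v).

Definition minor_union {K V : Type} (W : K -> V -> Prop) : V -> Prop :=
  fun v => exists a, W a v.

Definition separates {V : Type} (E : V -> V -> Prop) (S X Y : V -> Prop) : Prop :=
  forall x y, X x -> ~ S x -> Y y -> ~ S y ->
    ~ connected_in E (fun w => ~ S w) x y.

Definition kurepa_minor_family (K : Type) {V : Type} (E : V -> V -> Prop)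
  (I : Type) (F : I -> K -> V -> Prop) : Prop :=
  (forall i, K_minor K E (F i)) /\
  (forall i j, i <> j -> exists S : V -> Prop,
     card_lt {v | S v} K /\ separates E S (minor_union (F i)) (minor_union (F j))).

(* Main.v *)
Require Import Defs.
From Stdlib Require Import Classical ClassicalEpsilon FunctionalExtensionality PropExtensionality ProofIrrelevance Relations Relation_Operators Wellfounded.

Lemma sig_eq {A} {P : A -> Prop} (x y : {a | P a}) : proj1_sig x = proj1_sig y -> x = y.
Proof. destruct x as [x px], y as [y py]; simpl; intros ->. f_equal. apply proof_irrelevance. Qed.

Lemma choice' {A B} (R : A -> B -> Prop) : (forall x, exists y, R x y) -> exists f : A -> B, forall x, R x (f x).
Proof. intros H. exists (fun x => proj1_sig (constructive_indefinite_description _ (H x))).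
  intros x. exact (proj2_sig (constructive_indefinite_description _ (H x))). Qed.

Lemma inj_trans A B C : inj_le A B -> inj_le B C -> inj_le A C.
Proof. intros [f Hf] [g Hg]. exists (fun x => g (f x)). auto. Qed.

Lemma small_inj (K X Y : Type) : inj_le X Y -> ~ inj_le K Y -> ~ inj_le K X.
Proof. intros H1 H2 H3. apply H2. eapply inj_trans; eauto. Qed.

Lemma card_lt_inj K X Y : inj_le X Y -> card_lt Y K -> card_lt X K.
Proof. intros H [H1 H2]. split. eapply inj_trans; eauto. eapply small_inj; eauto. Qed.

Lemma inj_sub {A} (P : A -> Prop) : inj_le {a | P a} A.
Proof. exists (@proj1_sig _ _). intros; apply sig_eq; auto. Qed.

Lemma image_small K X (f : X -> K) : ~ inj_le K X -> ~ inj_le K {k | exists x, f x = k}.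
Proof. intros HX [h Hh]. apply HX.
  destruct (choice' (fun (k:{k | exists x, f x = k}) x => f x = proj1_sig k)) as [s Hs].
  { intros [k [x Hx]]; exists x; auto. }
  exists (fun k => s (h k)). intros x y E. apply Hh. apply sig_eq.
  rewrite <- (Hs (h x)), <- (Hs (h y)), E. reflexivity. Qed.

Lemma reg_swo K ltK : regular_cardinal K ltK ->
  (forall a, ~ ltK a a) /\ (forall a b c, ltK a b -> ltK b c -> ltK a c) /\
  (forall a b, ltK a b \/ a = b \/ ltK b a) /\ well_founded ltK.
Proof. intros [H _]. exact H. Qed.

Lemma seg_small K ltK : regular_cardinal K ltK -> forall a, ~ inj_le K {b | ltK b a}.
Proof. intros (_&_&H&_) a. apply (H a). Qed.

Lemma bound_fun K ltK (X:Type) (f : X -> K) : regular_cardinal K ltK -> ~ inj_le K X ->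
  exists b, forall x, ltK (f x) b.
Proof. intros R HX. destruct R as (_&_&_&H4).
  destruct (H4 (fun k => exists x, f x = k)) as [b Hb].
  - split. apply inj_sub. apply image_small; auto.
  - exists b. intros x. apply Hb. eauto.
Qed.

Lemma K_inh K ltK : regular_cardinal K ltK -> inhabited K.
Proof. intros (_&[f _]&_). exact (inhabits (f 0)). Qed.

Lemma bool_small K ltK : regular_cardinal K ltK -> ~ inj_le K bool.
Proof. intros (_&Hn&_) Hb. destruct (inj_trans _ _ _ Hn Hb) as [h Hh].
  assert (H01 : 0 <> 1) by discriminate. assert (H02 : 0 <> 2) by discriminate.
  assert (H12 : 1 <> 2) by discriminate.
  destruct (h 0) eqn:E0, (h 1) eqn:E1, (h 2) eqn:E2;
  first [ apply H01; apply Hh; congruence | apply H02; apply Hh; congruence | apply H12; apply Hh; congruence].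
Qed.

Lemma above2 K ltK : regular_cardinal K ltK -> forall a b, exists c, ltK a c /\ ltK b c.
Proof. intros R a b. destruct (bound_fun K ltK bool (fun x => if x then a else b) R (bool_small K ltK R)) as [c Hc].
  exists c. split; [apply (Hc true) | apply (Hc false)]. Qed.

Lemma wf_min {A} (R : A -> A -> Prop) : well_founded R -> forall P : A -> Prop,
  (exists x, P x) -> exists m, P m /\ forall x, P x -> ~ R x m.
Proof. intros W P [x Px]. apply NNPP; intros HN. revert x Px.
  apply (well_founded_ind W (fun x => ~ P x)). intros x IH Px.
  apply HN. exists x. split; auto. intros y Py Ryx. exact (IH y Ryx Py). Qed.

Lemma union_small K ltK (J Y : Type) (pi : Y -> J) : regular_cardinal K ltK ->
  ~ inj_le K J -> (forall j, ~ inj_le K {y | pi y = j}) -> ~ inj_le K Y.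
Proof.
  intros R HJ Hf [h Hh].
  assert (Hb: forall j, exists b, forall k, pi (h k) = j -> ltK k b).
  { intro j. destruct R as (_&_&_&H4). destruct (H4 (fun k => pi (h k) = j)) as [b Hb].
    - split. apply inj_sub. intros Hk. apply (Hf j).
      eapply inj_trans. exact Hk.
      exists (fun k : {k | pi (h k) = j} => exist (fun y => pi y = j) (h (proj1_sig k)) (proj2_sig k)).
      intros x y E. apply sig_eq. apply Hh. exact (f_equal (@proj1_sig _ _) E).
    - exists b. exact Hb. }
  destruct (choice' _ Hb) as [beta Hbeta].
  destruct (bound_fun K ltK J beta R HJ) as [b Hb'].
  destruct (reg_swo K ltK R) as (Hirr & Htr & _).
  apply (Hirr b). apply Htr with (beta (pi (h b))). apply Hbeta. reflexivity. apply Hb'.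
Qed.

Definition LD {T K} (lt : T -> T -> Prop) (ltK : K -> K -> Prop) (rho : T -> K) (t : T) (a : K) : Prop :=
  (forall s, lt s t -> ltK (rho s) a) /\
  (forall k, ltK k a -> exists s, lt s t /\ rho s = k) /\
  (forall s s', lt s t -> lt s' t -> (lt s s' <-> ltK (rho s) (rho s'))) /\
  (forall s s', lt s t -> lt s' t -> rho s = rho s' -> s = s').

Lemma LD_on_level {T K} (lt : T -> T -> Prop) (ltK : K -> K -> Prop) rho t a :
  LD lt ltK rho t a -> on_level lt ltK a t.
Proof.
  intros (H1&H2&H3&H4).
  set (f := fun s : {s | lt s t} => exist (fun b => ltK b a) (rho (proj1_sig s)) (H1 _ (proj2_sig s))).
  destruct (choice' (fun (b : {b | ltK b a}) (s : {s | lt s t}) => rho (proj1_sig s) = proj1_sig b)) as [g Hg].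
  { intros [b Hb]. destruct (H2 b Hb) as [s [Hs E]]. exists (exist _ s Hs). exact E. }
  exists f, g. split; [|split].
  - intros x. apply sig_eq. apply H4. apply (proj2_sig (g (f x))). apply (proj2_sig x).
    rewrite Hg. reflexivity.
  - intros y. apply sig_eq. simpl. apply Hg.
  - intros x y. unfold sub_rel. simpl. apply H3. apply (proj2_sig x). apply (proj2_sig y).
Qed.

Lemma on_level_LD {T K} (lt : T -> T -> Prop) (ltK : K -> K -> Prop) t a :
  inhabited K -> on_level lt ltK a t -> exists rho, LD lt ltK rho t a.
Proof.
  intros inh [f [g [Hgf [Hfg Ho]]]].
  set (rho := fun s => epsilon inh (fun k => exists p : lt s t, proj1_sig (f (exist _ s p)) = k)).
  assert (Hr : forall s (p : lt s t), rho s = proj1_sig (f (exist _ s p))).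
  { intros s p. unfold rho.
    destruct (epsilon_spec inh (fun k => exists p : lt s t, proj1_sig (f (exist _ s p)) = k)) as [p' E].
    { exists (proj1_sig (f (exist _ s p))). exists p. reflexivity. }
    rewrite <- E. replace p' with p by apply proof_irrelevance. reflexivity. }
  exists rho. split; [|split; [|split]].
  - intros s p. rewrite (Hr s p). apply (proj2_sig (f _)).
  - intros k Hk. exists (proj1_sig (g (exist _ k Hk))). split. apply (proj2_sig (g _)).
    rewrite (Hr _ (proj2_sig (g (exist _ k Hk)))).
    replace (exist (fun s => lt s t) (proj1_sig (g (exist _ k Hk))) (proj2_sig (g (exist _ k Hk))))
      with (g (exist _ k Hk)) by (apply sig_eq; reflexivity).
    rewrite Hfg. reflexivity.
  - intros s s' p p'. rewrite (Hr s p), (Hr s' p').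
    exact (Ho (exist _ s p) (exist _ s' p')).
  - intros s s' p p' E. rewrite (Hr s p), (Hr s' p') in E.
    apply sig_eq in E. apply (f_equal g) in E. rewrite !Hgf in E.
    exact (f_equal (@proj1_sig _ _) E).
Qed.

Lemma incr_no_down K ltK (sigma : K -> K) b : regular_cardinal K ltK ->
  (forall x y, ltK x b -> ltK y b -> ltK x y -> ltK (sigma x) (sigma y)) ->
  forall x, ltK x b -> ~ ltK (sigma x) x.
Proof.
  intros R Hi. destruct (reg_swo K ltK R) as (Hirr&Htr&Htri&W).
  intros x. induction x as [x IH] using (well_founded_ind W).
  intros Hxb Hs. set (y := sigma x) in *.
  assert (Hyb : ltK y b) by eauto.
  apply (IH y Hs Hyb). apply Hi; auto.
Qed.

Lemma LD_unique {T K} (lt : T -> T -> Prop) (ltK : K -> K -> Prop) rho1 rho2 t a b :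
  regular_cardinal K ltK -> LD lt ltK rho1 t a -> LD lt ltK rho2 t b -> ~ ltK a b.
Proof.
  intros R L1 L2 Hab. destruct (K_inh K ltK R) as [k0].
  destruct (reg_swo K ltK R) as (Hirr&Htr&Htri&W).
  destruct L1 as (A1&B1&C1&D1). destruct L2 as (A2&B2&C2&D2).
  set (sel := fun k => epsilon (inhabits t) (fun s => lt s t /\ rho2 s = k)).
  assert (Hsel : forall k, ltK k b -> lt (sel k) t /\ rho2 (sel k) = k).
  { intros k Hk. unfold sel. apply epsilon_spec. apply B2; auto. }
  apply (incr_no_down K ltK (fun k => rho1 (sel k)) b R) with a; auto.
  - intros x y Hx Hy Hxy. destruct (Hsel x Hx) as [P1 E1]. destruct (Hsel y Hy) as [P2 E2].
    apply C1; auto. apply C2; auto. rewrite E1, E2. auto.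
  - apply A1. apply Hsel. auto.
Qed.

Lemma level_unique {T K} (lt : T -> T -> Prop) (ltK : K -> K -> Prop) t a b :
  regular_cardinal K ltK -> on_level lt ltK a t -> on_level lt ltK b t -> a = b.
Proof.
  intros R H1 H2. pose proof (K_inh K ltK R) as inh.
  destruct (on_level_LD lt ltK t a inh H1) as [r1 L1].
  destruct (on_level_LD lt ltK t b inh H2) as [r2 L2].
  destruct (reg_swo K ltK R) as (Hirr&Htr&Htri&W).
  destruct (Htri a b) as [H|[H|H]]; auto.
  - exfalso. exact (LD_unique lt ltK r1 r2 t a b R L1 L2 H).
  - exfalso. exact (LD_unique lt ltK r2 r1 t b a R L2 L1 H).
Qed.

Lemma LD_pred {T K} (lt : T -> T -> Prop) (ltK : K -> K -> Prop) rho t a b :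
  (forall x y z, lt x y -> lt y z -> lt x z) -> (forall x y z, ltK x y -> ltK y z -> ltK x z) ->
  LD lt ltK rho t b -> ltK a b -> exists s, lt s t /\ LD lt ltK rho s a.
Proof.
  intros Tr TrK (A&B&C&D) Hab. destruct (B a Hab) as [s [Hs E]].
  exists s. split; auto. split; [|split; [|split]].
  - intros u Hu. rewrite <- E. apply C; eauto.
  - intros k Hk. destruct (B k (TrK _ _ _ Hk Hab)) as [u [Hu Eu]].
    exists u. split; auto. apply C; auto. rewrite Eu, E; auto.
  - intros u u' Hu Hu'. apply C; eauto.
  - intros u u' Hu Hu'. apply D; eauto.
Qed.

Lemma ord_iso_inj A ra B rb : ord_iso A ra B rb -> inj_le A B /\ inj_le B A.
Proof. intros [f [g [H1 [H2 _]]]]. split.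
  - exists f. intros x y E. rewrite <- (H1 x), <- (H1 y), E. reflexivity.
  - exists g. intros x y E. rewrite <- (H2 x), <- (H2 y), E. reflexivity.
Qed.

Lemma embed_equip K ltK (A : Type) (R : A -> A -> Prop) : regular_cardinal K ltK ->
  well_founded R -> (forall x y, R x y \/ x = y \/ R y x) ->
  (forall x, ~ inj_le K {y | R y x}) -> inj_le K A -> equipotent A K.
Proof.
  intros RK W Tri Hs HKA. pose proof (K_inh K ltK RK) as inh.
  destruct (reg_swo K ltK RK) as (Hirr&Htr&Htri&WK).
  set (F := fun x (f : forall y, R y x -> K) => epsilon inh (fun k =>
        (~ exists y (p : R y x), f y p = k) /\ forall k', ltK k' k -> exists y (p:R y x), f y p = k')).
  set (h := Fix W (fun _ => K) F).
  assert (Heq : forall x, h x = F x (fun y _ => h y)).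
  { intros x. unfold h. apply (Fix_eq W (fun _ => K) F). intros x0 f g Hfg.
    assert (f = g) as ->. { apply functional_extensionality_dep; intro y.
      apply functional_extensionality_dep; intro p. apply Hfg. }
    reflexivity. }
  assert (Spec : forall x, (~ exists y, R y x /\ h y = h x) /\
                   forall k', ltK k' (h x) -> exists y, R y x /\ h y = k').
  { intros x. rewrite Heq. unfold F at 1 2.
    match goal with |- context [epsilon inh ?P] => pose proof (epsilon_spec inh P) as E end.
    destruct E as [E1 E2].
    - destruct (wf_min ltK WK (fun k => ~ exists y (p : R y x), h y = k)) as [m [Hm1 Hm2]].
      + apply NNPP. intros HN.
        assert (Hall : forall k, exists y : {y | R y x}, h (proj1_sig y) = k).
        { intros k. apply NNPP; intros Hk. apply HN. exists k. intros [y [p E]].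
          apply Hk. exists (exist _ y p). exact E. }
        destruct (choice' _ Hall) as [c Hc]. apply (Hs x). exists c.
        intros k1 k2 E. rewrite <- (Hc k1), <- (Hc k2), E. reflexivity.
      + exists m. split; auto. intros k' Hk'. apply NNPP. intros HN. exact (Hm2 k' HN Hk').
    - split.
      + intros [y [Ry Ey]]. apply E1. exists y, Ry. exact Ey.
      + intros k' Hk'. destruct (E2 k' Hk') as [y [p Ey]]. exists y. split; auto. }
  assert (Hinj : forall x y, h x = h y -> x = y).
  { intros x y E. destruct (Tri x y) as [H|[H|H]]; auto.
    - exfalso. apply (proj1 (Spec y)). exists x. auto.
    - exfalso. apply (proj1 (Spec x)). exists y. auto. }
  assert (Hsurj : forall k, exists x, h x = k).
  { apply NNPP. intros HN.
    destruct (wf_min ltK WK (fun k => ~ exists x, h x = k)) as [k0 [H0 H0']].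
    { apply not_all_ex_not in HN. exact HN. }
    assert (Hlt : forall x, ltK (h x) k0).
    { intros x. destruct (Htri (h x) k0) as [H|[H|H]]; auto.
      - exfalso. apply H0. eauto.
      - exfalso. destruct (proj2 (Spec x) k0 H) as [y [_ Ey]]. apply H0; eauto. }
    apply (seg_small K ltK RK k0). eapply inj_trans. exact HKA.
    exists (fun x => exist (fun b => ltK b k0) (h x) (Hlt x)).
    intros x y E. apply Hinj. exact (f_equal (@proj1_sig _ _) E). }
  destruct (choice' _ Hsurj) as [g Hg].
  exists h, g. split.
  - intros x. apply Hinj. apply Hg.
  - apply Hg.
Qed.

Lemma conn_refl {V} (E : V -> V -> Prop) X u : connected_in E X u u.
Proof. apply rt_refl. Qed.

Lemma conn_trans {V} (E : V -> V -> Prop) X u v w :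
  connected_in E X u v -> connected_in E X v w -> connected_in E X u w.
Proof. intros; eapply rt_trans; eauto. Qed.

Lemma conn_sym {V} (E : V -> V -> Prop) X u v : (forall a b, E a b -> E b a) ->
  connected_in E X u v -> connected_in E X v u.
Proof. intros Hs H. induction H.
  - apply rt_step. destruct H as (?&?&?). repeat split; auto.
  - apply rt_refl.
  - eapply rt_trans; eauto. Qed.

Lemma conn_mono {V} (E : V -> V -> Prop) (X Y : V -> Prop) u v : (forall x, X x -> Y x) ->
  connected_in E X u v -> connected_in E Y u v.
Proof. intros Hs H. induction H.
  - apply rt_step. destruct H as (?&?&?). repeat split; auto.
  - apply rt_refl.
  - eapply rt_trans; eauto. Qed.

Lemma conn_edge {V} (E : V -> V -> Prop) (X : V -> Prop) u v : X u -> X v -> E u v -> connected_in E X u v.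
Proof. intros. apply rt_step. repeat split; auto. Qed.

Lemma conn_end {V} (E : V -> V -> Prop) (X : V -> Prop) u v : connected_in E X u v -> X u -> X v.
Proof. intros H. induction H; auto. destruct H as (?&?&?); auto. Qed.

Lemma separates_sym {V} (E : V -> V -> Prop) S X Y : (forall a b, E a b -> E b a) ->
  separates E S X Y -> separates E S Y X.
Proof. intros Hs H x y Hx Sx Hy Sy C. apply (H y x Hy Sy Hx Sx). apply conn_sym; auto. Qed.

Definition cn {V K} (E : V -> V -> Prop) (ltK : K -> K -> Prop) (f : V -> K) (a : K) (u w : V) :=
  connected_in E (fun x => ~ ltK (f x) a) u w.
Definition isrep {V K} (E : V -> V -> Prop) (ltK : K -> K -> Prop) (f : V -> K) a v :=
  ~ ltK (f v) a /\ forall u, cn E ltK f a v u -> ~ ltK (f u) (f v).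
Definition BT {V K} (E : V -> V -> Prop) (ltK : K -> K -> Prop) (f : V -> K) :=
  {p : K * V | isrep E ltK f (fst p) (snd p)}.
Definition BTlt {V K} (E : V -> V -> Prop) (ltK : K -> K -> Prop) (f : V -> K) (p q : BT E ltK f) : Prop :=
  ltK (fst (proj1_sig p)) (fst (proj1_sig q)) /\
  cn E ltK f (fst (proj1_sig p)) (snd (proj1_sig p)) (snd (proj1_sig q)).

Lemma backward K ltK V E : regular_cardinal K ltK -> simple_graph V E -> equipotent V K ->
  kl_connected K K V E ->
  forall I (F : I -> K -> V -> Prop), ~ inj_le I K -> kurepa_minor_family K E I F ->
  exists (T : Type) (lt : T -> T -> Prop), kurepa_tree K ltK T lt.
Proof.
  intros RK [Esym Eirr] [f [g [Hgf Hfg]]] Hkl I F HI [HFm HFs].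
  destruct (reg_swo K ltK RK) as (Hirr&Htr&Htri&WK).
  assert (finj : forall u v, f u = f v -> u = v).
  { intros u v E'. rewrite <- (Hgf u), <- (Hgf v), E'. reflexivity. }
  exists (BT E ltK f), (BTlt E ltK f).
  assert (mono : forall a b u, ltK a b -> ~ ltK (f u) b -> ~ ltK (f u) a).
  { intros a b u H1 H2 H3. apply H2. eauto. }
  assert (cn_mono : forall a b u w, ltK a b -> cn E ltK f b u w -> cn E ltK f a u w).
  { intros a b u w H1 H2. unfold cn in *. eapply conn_mono; [|exact H2]. intros x. apply mono; auto. }
  assert (cn_sym : forall a u w, cn E ltK f a u w -> cn E ltK f a w u).
  { intros. apply conn_sym; auto. }
  assert (cn_tr : forall a u v w, cn E ltK f a u v -> cn E ltK f a v w -> cn E ltK f a u w).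
  { intros. eapply conn_trans; eauto. }
  assert (rep_ex : forall a w, ~ ltK (f w) a -> exists v, isrep E ltK f a v /\ cn E ltK f a v w).
  { intros a w Hw.
    destruct (wf_min ltK WK (fun k => exists u, cn E ltK f a w u /\ f u = k)) as [m [[u0 [H1 H2]] Hm]].
    { exists (f w). exists w. split; auto. apply conn_refl. }
    exists u0. split; [split|].
    - exact (conn_end _ _ _ _ H1 Hw).
    - intros u Hu. rewrite H2. apply Hm. exists u. split; eauto.
    - apply cn_sym; auto. }
  assert (rep_uniq : forall a v v', isrep E ltK f a v -> isrep E ltK f a v' -> cn E ltK f a v v' -> v = v').
  { intros a v v' [_ H1] [_ H2] H. apply finj.
    destruct (Htri (f v) (f v')) as [H'|[H'|H']]; auto.
    - exfalso. apply (H2 v); auto.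
    - exfalso. apply (H1 v'); auto. }
  assert (BT_eq : forall p q : BT E ltK f, fst (proj1_sig p) = fst (proj1_sig q) ->
                     snd (proj1_sig p) = snd (proj1_sig q) -> p = q).
  { intros [[a v] hp] [[b w] hq]; simpl; intros -> ->. apply sig_eq. reflexivity. }
  set (fs := fun p : BT E ltK f => fst (proj1_sig p)).
  set (sn := fun p : BT E ltK f => snd (proj1_sig p)).
  assert (isr : forall p : BT E ltK f, isrep E ltK f (fs p) (sn p)).
  { intros p. exact (proj2_sig p). }
  assert (plin : forall t p q : BT E ltK f, BTlt E ltK f p t -> BTlt E ltK f q t ->
            (fs p = fs q -> p = q) /\ (ltK (fs p) (fs q) -> BTlt E ltK f p q)).
  { intros t p q [Hp1 Hp2] [Hq1 Hq2]. split.
    - intros Heq. apply BT_eq; auto. apply (rep_uniq (fs p)); auto.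
      + rewrite Heq. apply isr.
      + unfold fs, sn in *. rewrite <- Heq in Hq2. eauto.
    - intros Hlt. split; auto. unfold fs, sn in *.
      apply cn_mono with (a := fst (proj1_sig p)) in Hq2; auto. eauto. }
  assert (Hlev : forall t, LD (BTlt E ltK f) ltK fs t (fs t)).
  { intros t. split; [|split; [|split]].
    - intros s [Hs _]. exact Hs.
    - intros k Hk. destruct (isr t) as [Ht _].
      destruct (rep_ex k (sn t) (mono _ _ _ Hk Ht)) as [v [Hv1 Hv2]].
      exists (exist _ (k, v) Hv1). split; [split|]; simpl; auto.
    - intros s s' Hs Hs'. split; [intros [H _]; exact H|]. apply plin with t; auto.
    - intros s s' Hs Hs'. apply plin with t; auto. }
  assert (Hlev' : forall t a, on_level (BTlt E ltK f) ltK a t -> a = fs t).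
  { intros t a H. apply (level_unique (BTlt E ltK f) ltK t); auto.
    apply LD_on_level with fs. apply Hlev. }
  assert (Vsmall : forall a, card_lt {v | ltK (f v) a} K).
  { intros a. split.
    - exists (fun v => f (proj1_sig v)). intros x y E'. apply sig_eq. auto.
    - apply small_inj with {b | ltK b a}. 2: apply (seg_small K ltK RK).
      exists (fun v => exist (fun b => ltK b a) (f (proj1_sig v)) (proj2_sig v)).
      intros x y E'. apply sig_eq. apply finj. exact (f_equal (@proj1_sig _ _) E'). }
  set (good := fun i a c => forall u, F i c u -> ~ ltK (f u) a).
  assert (good_ex : forall i a, exists c, good i a c).
  { intros i a. apply NNPP. intros HN.
    assert (Hc : forall c, exists u, F i c u /\ ltK (f u) a).
    { intros c. apply NNPP. intros Hc. apply HN. exists c. intros u Hu Hfu. apply Hc. eauto. }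
    destruct (choice' _ Hc) as [uc Huc].
    apply (seg_small K ltK RK a).
    exists (fun c => exist (fun b => ltK b a) (f (uc c)) (proj2 (Huc c))).
    intros c c' E'. apply NNPP. intros Hne. apply (proj1 (HFm i) c c' Hne (uc c)).
    split. apply Huc. apply (f_equal (@proj1_sig _ _)) in E'. simpl in E'. apply finj in E'. rewrite E'. apply Huc. }
  assert (good_conn : forall i a c c' u u', good i a c -> good i a c' -> F i c u -> F i c' u' ->
            cn E ltK f a u u').
  { intros i a c c' u u' G1 G2 H1 H2. destruct (HFm i) as (_&_&Hc&Ha).
    destruct (classic (c = c')) as [<-|Hne].
    - eapply conn_mono; [|apply Hc; eauto]. exact G1.
    - destruct (Ha c c' Hne) as [x [y (Hx&Hy&Exy)]].
      apply cn_tr with x. eapply conn_mono; [|apply Hc; eauto]. exact G1.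
      apply cn_tr with y. apply conn_edge; auto.
      eapply conn_mono; [|apply Hc; eauto]. exact G2. }
  set (B := fun i (t : BT E ltK f) => exists c, good i (fs t) c /\ exists u, F i c u /\ cn E ltK f (fs t) (sn t) u).
  assert (B_node : forall i a, exists t, B i t /\ fs t = a).
  { intros i a. destruct (good_ex i a) as [c Hc]. destruct (HFm i) as (_&Hne&_).
    destruct (Hne c) as [u Hu]. destruct (rep_ex a u (Hc u Hu)) as [r [Hr1 Hr2]].
    exists (exist _ (a, r) Hr1). split; auto. exists c. split; auto. exists u. split; auto. }
  assert (B_same : forall i t t', B i t -> B i t' -> fs t = fs t' -> t = t').
  { intros i t t' [c [Gc [u [Hu Cu]]]] [c' [Gc' [u' [Hu' Cu']]]] Heq.
    apply BT_eq; auto. apply (rep_uniq (fs t)). apply isr. rewrite Heq. apply isr.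
    rewrite <- Heq in Gc', Cu'. apply cn_tr with u. exact Cu. apply cn_tr with u'.
    exact (good_conn i (fs t) c c' u u' Gc Gc' Hu Hu'). apply cn_sym; exact Cu'. }
  assert (B_lt : forall i t t', B i t -> B i t' -> ltK (fs t) (fs t') -> BTlt E ltK f t t').
  { intros i t t' [c [Gc [u [Hu Cu]]]] [c' [Gc' [u' [Hu' Cu']]]] Hl.
    split; auto. apply cn_tr with u. exact Cu. apply cn_tr with u'.
    - apply (good_conn i (fs t) c c' u u' Gc); auto.
      intros x Hx. apply mono with (fs t'); auto.
    - apply cn_sym. eapply cn_mono; eauto. }
  assert (B_chain : forall i, is_chain (BTlt E ltK f) (B i)).
  { intros i x y Hx Hy. destruct (Htri (fs x) (fs y)) as [H|[H|H]].
    - right; left. eauto.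
    - left. eauto.
    - right; right. eauto. }
  assert (B_branch : forall i, is_branch (BTlt E ltK f) (B i)).
  { intros i. split; auto. intros D HD Hsub x Hx.
    destruct (B_node i (fs x)) as [y [Hy Ey]].
    destruct (HD x y Hx (Hsub y Hy)) as [->|[[H _]|[H _]]]; auto.
    - exfalso. change (ltK (fs x) (fs y)) in H || change (ltK (fs y) (fs x)) in H. rewrite Ey in H. exact (Hirr _ H).
    - exfalso. change (ltK (fs x) (fs y)) in H || change (ltK (fs y) (fs x)) in H. rewrite Ey in H. exact (Hirr _ H). }
  assert (B_iso : forall i, ord_iso {x | B i x} (sub_rel (BTlt E ltK f) (B i)) K ltK).
  { intros i. destruct (choice' (fun a (y : {x | B i x}) => fs (proj1_sig y) = a)) as [g0 Hg0].
    { intros a. destruct (B_node i a) as [t [Ht Et]]. exists (exist _ t Ht). exact Et. }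
    exists (fun x => fs (proj1_sig x)), g0. split; [|split].
    - intros x. apply sig_eq. apply (B_same i). apply (proj2_sig (g0 _)). apply (proj2_sig x). apply Hg0.
    - intros a. apply Hg0.
    - intros x y. unfold sub_rel. split. intros [H _]; exact H. apply (B_lt i). apply (proj2_sig x). apply (proj2_sig y). }
  assert (B_dist : forall i j, i <> j -> exists t, B i t /\ ~ B j t).
  { intros i j Hij. destruct (HFs i j Hij) as [S [[_ HS] Hsep]].
    destruct (bound_fun K ltK {v | S v} (fun v => f (proj1_sig v)) RK HS) as [b Hb].
    assert (HSb : forall v, S v -> ltK (f v) b). { intros v Sv. exact (Hb (exist _ v Sv)). }
    destruct (B_node i b) as [t [Ht Et]]. exists t. split; auto.
    intros [c' [Gc' [u' [Hu' Cu']]]]. destruct Ht as [c [Gc [u [Hu Cu]]]].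
    rewrite Et in *. apply (Hsep u u').
    - exists c; auto.
    - intros Su. apply (Gc u Hu). auto.
    - exists c'; auto.
    - intros Su. apply (Gc' u' Hu'). auto.
    - eapply conn_mono; [|apply cn_tr with (sn t); [apply cn_sym; exact Cu| exact Cu']].
      intros x Hx Sx. apply Hx. auto. }
  split; [|split; [|split; [|split]]].
  -
    split; [|split].
    + intros a [H _]. eapply Hirr; eauto.
    + intros a b c [H1 H2] [H3 H4]. split. eauto. apply cn_tr with (sn b). exact H2.
      apply cn_mono with (fs b); auto.
    + intros t. split.
      * intros x y Hx Hy. destruct (Htri (fs x) (fs y)) as [H|[H|H]].
        -- right; left. apply (plin t x y); auto.
        -- left. apply (plin t x y); auto.
        -- right; right. apply (plin t y x); auto.
      * intros Q HQ [x0 Hx0].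
        destruct (wf_min ltK WK (fun k => exists p, Q p /\ fs p = k)) as [m [[p0 [Hp0 Ep0]] Hm]].
        { exists (fs x0); eauto. }
        exists p0. split; auto. intros x Hx.
        destruct (Htri (fs x) m) as [H|[H|H]].
        -- exfalso. apply (Hm (fs x)); eauto.
        -- left. apply (plin t x p0); auto. congruence.
        -- right. apply (plin t p0 x); auto. congruence.
  - intros a. destruct (Hkl (fun v => ltK (f v) a) (Vsmall a)) as [[[C [v [Hv _]]]] _].
    destruct (rep_ex a v Hv) as [r [Hr1 _]].
    exists (exist _ (a, r) Hr1). apply LD_on_level with fs. apply Hlev.
  - intros t Ht. apply ord_iso_inj in Ht. destruct Ht as [_ Ht].
    apply (seg_small K ltK RK (fs t)). eapply inj_trans. exact Ht.
    destruct (Hlev t) as (A1&_&_&A4).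
    exists (fun s => exist (fun b => ltK b (fs t)) (fs (proj1_sig s)) (A1 _ (proj2_sig s))).
    intros x y E'. apply sig_eq. apply A4. apply (proj2_sig x). apply (proj2_sig y).
    exact (f_equal (@proj1_sig _ _) E').
  - intros a. destruct (Hkl (fun v => ltK (f v) a) (Vsmall a)) as [_ Hc].
    eapply card_lt_inj; [|exact Hc].
    assert (Hp : forall x : {t | on_level (BTlt E ltK f) ltK a t},
      exists v, ~ ltK (f v) a /\ (fun u => ~ ltK (f u) a /\ cn E ltK f a (sn (proj1_sig x)) u) =
         (fun u => ~ ltK (f u) a /\ connected_in E (fun w => ~ ltK (f w) a) v u)).
    { intros [t Ht]. exists (sn t). split; auto. apply Hlev' in Ht. rewrite Ht. apply isr. }
    exists (fun x => (exist (fun C : V -> Prop => exists v, ~ ltK (f v) a /\ C = (fun u => ~ ltK (f u) a /\ connected_in E (fun w => ~ ltK (f w) a) v u)) _ (Hp x) : components E (fun v => ltK (f v) a))).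
    intros [x Hx] [y Hy] E'. apply sig_eq. simpl.
    apply (f_equal (@proj1_sig _ _)) in E'. simpl in E'.
    pose proof (Hlev' _ _ Hx) as Ex. pose proof (Hlev' _ _ Hy) as Ey.
    assert (Hyy : ~ ltK (f (sn y)) a /\ cn E ltK f a (sn y) (sn y)).
    { split. rewrite Ey. apply isr. apply conn_refl. }
    pose proof (f_equal (fun C : V -> Prop => C (sn y)) E') as E2. simpl in E2.
    rewrite <- E2 in Hyy. destruct Hyy as [_ Hyy].
    apply BT_eq. change (fs x = fs y). congruence. apply (rep_uniq a).
    rewrite Ex. apply isr. rewrite Ey. apply isr. exact Hyy.
  - intros [h Hh].
    set (bi := fun i => exist (fun C : BT E ltK f -> Prop => is_branch (BTlt E ltK f) C /\
          ord_iso {x | C x} (sub_rel (BTlt E ltK f) C) K ltK) (B i) (conj (B_branch i) (B_iso i))).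
    apply HI. exists (fun i => h (bi i)). intros i j E'. apply Hh in E'.
    apply (f_equal (@proj1_sig _ _)) in E'. simpl in E'.
    apply NNPP. intros Hne. destruct (B_dist i j Hne) as [t [H1 H2]]. apply H2.
    rewrite <- E'. exact H1.
Qed.

Lemma LD_pred' {T K} (lt : T -> T -> Prop) (ltK : K -> K -> Prop) rho t b s :
  (forall x y z, lt x y -> lt y z -> lt x z) -> (forall x y z, ltK x y -> ltK y z -> ltK x z) ->
  LD lt ltK rho t b -> lt s t -> LD lt ltK rho s (rho s).
Proof.
  intros Tr TrK (A&B&C&D) Hs. split; [|split; [|split]].
  - intros u Hu. apply C; eauto.
  - intros k Hk. destruct (B k) as [u [Hu Eu]]. { apply TrK with (rho s); auto. }
    exists u. split; auto. apply C; auto. rewrite Eu; auto.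
  - intros u u' Hu Hu'. apply C; eauto.
  - intros u u' Hu Hu'. apply D; eauto.
Qed.

Lemma lex_wf {A K} (ltK : K -> K -> Prop) (p q : A -> K) : well_founded ltK ->
  well_founded (fun x y => ltK (p x) (p y) \/ (p x = p y /\ ltK (q x) (q y))).
Proof.
  intros W.
  assert (H : forall a b x, p x = a -> q x = b -> Acc (fun x y => ltK (p x) (p y) \/ (p x = p y /\ ltK (q x) (q y))) x).
  { intros a. induction a as [a IHa] using (well_founded_ind W).
    intros b. induction b as [b IHb] using (well_founded_ind W).
    intros x Ea Eb. constructor. intros y [Hy|[Hy1 Hy2]].
    - apply (IHa (p y)) with (b := q y); [congruence|reflexivity|reflexivity].
    - apply (IHb (q y)); [congruence|congruence|reflexivity]. }
  intros x. apply (H (p x) (q x) x); reflexivity.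
Qed.

Lemma branch_down {T} (lt : T -> T -> Prop) C t s : is_tree T lt -> is_branch lt C -> C t -> lt s t -> C s.
Proof.
  intros [Ti [Tt Tw]] [Hch Hmax] Ct Hst.
  apply (Hmax (fun x => C x \/ x = s)).
  - intros x y [Hx| ->] [Hy| ->].
    + apply Hch; auto.
    + destruct (Hch x t Hx Ct) as [->|[H|H]].
      * right; right; auto.
      * destruct (proj1 (Tw t) x s H Hst) as [E|[E|E]]; auto.
      * right; right. eauto.
    + destruct (Hch y t Hy Ct) as [->|[H|H]].
      * right; left; auto.
      * destruct (proj1 (Tw t) s y Hst H) as [E|[E|E]]; auto.
      * right; left; eauto.
    + left; auto.
  - intros x Hx; left; auto.
  - right; auto.
Qed.

Lemma comp_share {V} (E : V -> V -> Prop) S (C1 C2 : components E S) r :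
  (forall a b, E a b -> E b a) -> proj1_sig C1 r -> proj1_sig C2 r -> C1 = C2.
Proof.
  destruct C1 as [C1 [v1 [S1 E1]]], C2 as [C2 [v2 [S2 E2]]]. simpl. intros Hs H1 H2.
  apply sig_eq. simpl. subst C1 C2. destruct H1 as [_ H1], H2 as [_ H2].
  apply functional_extensionality; intros u. apply propositional_extensionality.
  split; intros [Hu Hc]; split; auto.
  - apply conn_trans with r. exact H2. apply conn_trans with v1. apply conn_sym; auto. exact Hc.
  - apply conn_trans with r. exact H1. apply conn_trans with v2. apply conn_sym; auto. exact Hc.
Qed.

Lemma forward K ltK T lt : regular_cardinal K ltK -> kurepa_tree K ltK T lt ->
  exists (V : Type) (E : V -> V -> Prop),
      simple_graph V E /\ equipotent V K /\ kl_connected K K V E /\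
      exists (I : Type) (F : I -> K -> V -> Prop),
        ~ inj_le I K /\ kurepa_minor_family K E I F.
Proof.
  intros RK [[Ti [Tt Tw]] [Hne [Hnk [Hsz Hbr]]]].
  assert (Htree : is_tree T lt) by (split; auto).
  pose proof (K_inh K ltK RK) as inh.
  destruct (reg_swo K ltK RK) as (Hirr&Htr&Htri&WK).
  set (V0 := {t : T | exists a, on_level lt ltK a t}).
  set (lev := fun v : V0 => epsilon inh (fun a => on_level lt ltK a (proj1_sig v))).
  assert (Hlev : forall v : V0, on_level lt ltK (lev v) (proj1_sig v)).
  { intros v. unfold lev. apply epsilon_spec. exact (proj2_sig v). }
  assert (lev_eq : forall v a, on_level lt ltK a (proj1_sig v) -> lev v = a).
  { intros v a H. apply (level_unique lt ltK (proj1_sig v)); auto. }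
  assert (lev_small : forall a, ~ inj_le K {v : V0 | lev v = a}).
  { intros a. apply small_inj with {t | on_level lt ltK a t}. 2: apply (Hsz a).
    assert (Hlv : forall v : {v : V0 | lev v = a}, on_level lt ltK a (proj1_sig (proj1_sig v))).
    { intros [v Hv]. simpl. rewrite <- Hv. apply Hlev. }
    exists (fun v => exist (fun t => on_level lt ltK a t) (proj1_sig (proj1_sig v)) (Hlv v)).
    intros x y E'. apply sig_eq. apply sig_eq. exact (f_equal (@proj1_sig _ _) E'). }
  assert (node_at : forall a, exists v : V0, lev v = a).
  { intros a. destruct (Hne a) as [t Ht].
    exists (exist (fun t => exists a, on_level lt ltK a t) t (ex_intro _ a Ht)). apply lev_eq. exact Ht. }
  assert (below_small : forall c, ~ inj_le K {v : V0 | ltK (lev v) c}).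
  { intros c. apply (union_small K ltK {b | ltK b c} {v : V0 | ltK (lev v) c}
      (fun v : {v : V0 | ltK (lev v) c} => exist (fun b => ltK b c) (lev (proj1_sig v)) (proj2_sig v)) RK (seg_small K ltK RK c)).
    intros j. match goal with |- ~ inj_le K ?X =>
      apply small_inj with {v : V0 | lev v = proj1_sig j}; [
      exists (fun y : X => exist (fun v => lev v = proj1_sig j) (proj1_sig (proj1_sig y)) (f_equal (@proj1_sig K (fun b => ltK b c)) (proj2_sig y)))
      | apply lev_small ] end.
    intros x y E'. apply sig_eq. apply sig_eq. exact (f_equal (@proj1_sig _ _) E'). }
  assert (Hh : forall a, exists h : T -> K, forall t t', on_level lt ltK a t -> on_level lt ltK a t' -> h t = h t' -> t = t').
  { intros a. destruct (proj1 (Hsz a)) as [h0 Hh0]. destruct inh as [k0].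
    exists (fun t => match excluded_middle_informative (on_level lt ltK a t) with left p => h0 (exist _ t p) | right _ => k0 end).
    intros t t' Ht Ht'. destruct (excluded_middle_informative (on_level lt ltK a t)) as [p|]; [|contradiction].
    destruct (excluded_middle_informative (on_level lt ltK a t')) as [p'|]; [|contradiction].
    intros E'. apply Hh0 in E'. exact (f_equal (@proj1_sig _ _) E'). }
  destruct (choice' _ Hh) as [H Hhs].
  set (hh := fun v : V0 => H (lev v) (proj1_sig v)).
  set (R := fun x y : V0 => ltK (lev x) (lev y) \/ (lev x = lev y /\ ltK (hh x) (hh y))).
  assert (Heq : equipotent V0 K).
  { apply (embed_equip K ltK V0 R RK).
    - apply lex_wf; auto.
    - intros x y. destruct (Htri (lev x) (lev y)) as [H1|[H1|H1]].
      + left; left; auto.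
      + destruct (Htri (hh x) (hh y)) as [H2|[H2|H2]].
        * left; right; auto.
        * right; left. apply sig_eq. apply (Hhs (lev x)). apply Hlev. rewrite H1; apply Hlev. unfold hh in H2. rewrite H2, H1. reflexivity.
        * right; right; right; auto.
      + right; right; left; auto.
    - intros x. destruct (above2 K ltK RK (lev x) (lev x)) as [c [Hc _]].
      apply small_inj with {v : V0 | ltK (lev v) c}. 2: apply below_small.
      assert (Hy : forall y : {y | R y x}, ltK (lev (proj1_sig y)) c).
      { intros y. destruct (proj2_sig y) as [Hy|[Hy _]]. eauto. rewrite Hy; auto. }
      exists (fun y => exist (fun v => ltK (lev v) c) (proj1_sig y) (Hy y)).
      intros y1 y2 E'. apply sig_eq. exact (f_equal (@proj1_sig _ _) E').
    - destruct (choice' (fun a (v : V0) => lev v = a)) as [nd Hnd]. { exact node_at. }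
      exists nd. intros a b E'. rewrite <- (Hnd a), <- (Hnd b), E'. reflexivity. }
  set (E0 := fun x y : V0 => lt (proj1_sig x) (proj1_sig y) \/ lt (proj1_sig y) (proj1_sig x)).
  assert (E0sym : forall a b, E0 a b -> E0 b a). { unfold E0; intros a b [X|X]; auto. }
  assert (Hkl : kl_connected K K V0 E0).
  { intros S [_ HS].
    destruct (bound_fun K ltK {v | S v} (fun v => lev (proj1_sig v)) RK HS) as [al Hal].
    assert (HSal : forall v, S v -> ltK (lev v) al). { intros v Sv. exact (Hal (exist _ v Sv)). }
    destruct (node_at al) as [va Hva].
    assert (nSva : ~ S va). { intros Sv. apply (Hirr al). rewrite <- Hva at 1. auto. }
    split.
    - constructor. exists (fun u => ~ S u /\ connected_in E0 (fun w => ~ S w) va u). exists va. split; auto.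
    - destruct (above2 K ltK RK al al) as [c [Hc _]].
      split.
      + eapply inj_trans.
        2: { destruct Heq as [ff [gg [H1 H2]]]. exists ff. intros x y E'. rewrite <- (H1 x), <- (H1 y), E'. reflexivity. }
        destruct (choice' (fun (C : components E0 S) (v : V0) => ~ S v /\ proj1_sig C = (fun u => ~ S u /\ connected_in E0 (fun w => ~ S w) v u))) as [w Hw].
        { intros C. exact (proj2_sig C). }
        exists w. intros C1 C2 E'. apply sig_eq. rewrite (proj2 (Hw C1)), (proj2 (Hw C2)), E'. reflexivity.
      + assert (Hr : forall C : components E0 S, exists r : V0, proj1_sig C r /\ ltK (lev r) c).
        { intros [C [v [Sv ->]]]. simpl.
          destruct (classic (ltK (lev v) c)) as [Hl|Hl].
          - exists v. split; auto. split; auto. apply conn_refl.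
          - assert (Hav : ltK al (lev v)).
            { destruct (Htri (lev v) c) as [X|[X|X]]. contradiction. rewrite X; auto. eauto. }
            destruct (on_level_LD lt ltK _ _ inh (Hlev v)) as [rho L].
            destruct (LD_pred lt ltK rho _ _ _ Tt Htr L Hav) as [s [Hs Ls]].
            assert (Ls' : on_level lt ltK al s) by (apply LD_on_level with rho; auto).
            set (r := exist (fun t => exists a, on_level lt ltK a t) s (ex_intro _ al Ls') : V0).
            assert (Hlr : lev r = al) by (apply lev_eq; auto).
            assert (nSr : ~ S r). { intros Sr. apply (Hirr al). rewrite <- Hlr at 1. auto. }
            exists r. split. split; auto. apply conn_edge; auto. right. exact Hs. rewrite Hlr. auto. }
        destruct (choice' _ Hr) as [rc Hrc].
        apply small_inj with {v : V0 | ltK (lev v) c}. 2: apply below_small.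
        exists (fun C => exist (fun v => ltK (lev v) c) (rc C) (proj2 (Hrc C))).
        intros C1 C2 E'. apply (f_equal (@proj1_sig _ _)) in E'. simpl in E'.
        apply (comp_share E0 S C1 C2 (rc C2) E0sym). rewrite <- E'. apply Hrc. apply Hrc. }
  set (Br := {C : T -> Prop | is_branch lt C /\ ord_iso {x | C x} (sub_rel lt C) K ltK}).
  assert (HPsi : forall i : Br, exists psi : K -> T, (forall a, proj1_sig i (psi a)) /\
       (forall a b, ltK a b <-> lt (psi a) (psi b)) /\ (forall t, proj1_sig i t -> exists a, psi a = t)).
  { intros [C [Hb [f [g [H1 [H2 H3]]]]]]. simpl. exists (fun a => proj1_sig (g a)). split; [|split].
    - intros a. exact (proj2_sig (g a)).
    - intros a b. pose proof (H3 (g a) (g b)) as X. unfold sub_rel in X. rewrite !H2 in X. tauto.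
    - intros t Ct. exists (f (exist _ t Ct)). rewrite H1. reflexivity. }
  destruct (choice' _ HPsi) as [Psi HPs].
  assert (Pinj : forall i a b, Psi i a = Psi i b -> a = b).
  { intros i a b E'. destruct (HPs i) as [_ [Ho _]].
    destruct (Htri a b) as [X|[X|X]]; auto; exfalso; apply Ho in X; rewrite E' in X; eapply Ti; eauto. }
  assert (Plev : forall i a, on_level lt ltK a (Psi i a)).
  { intros i a. destruct (HPs i) as [Pin [Ho Psur]].
    set (rho := fun s => epsilon inh (fun b => Psi i b = s)).
    assert (Hrho : forall s, lt s (Psi i a) -> Psi i (rho s) = s).
    { intros s Hs. unfold rho. apply epsilon_spec. apply Psur.
      apply (branch_down lt (proj1_sig i) (Psi i a) s); auto. exact (proj1 (proj2_sig i)). }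
    apply LD_on_level with rho. split; [|split; [|split]].
    - intros s Hs. apply Ho. rewrite Hrho; auto.
    - intros k Hk. exists (Psi i k). split. apply Ho; auto. apply (Pinj i). apply Hrho. apply Ho; auto.
    - intros s s' Hs Hs'. pose proof (Ho (rho s) (rho s')) as X.
      rewrite (Hrho s Hs), (Hrho s' Hs') in X. tauto.
    - intros s s' Hs Hs' E'. transitivity (Psi i (rho s)). symmetry; auto. rewrite E'. auto. }
  set (nd := fun i a => exist (fun t => exists a, on_level lt ltK a t) (Psi i a) (ex_intro _ a (Plev i a)) : V0).
  exists V0, E0. split; [|split; [|split]].
  - split. exact E0sym. intros v [X|X]; eapply Ti; eauto.
  - exact Heq.
  - exact Hkl.
  - exists Br, (fun i a (v : V0) => proj1_sig v = Psi i a). split. exact Hbr. split.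
    + intros i. split; [|split; [|split]].
      * intros a b Hab v [H1 H2]. apply Hab. apply (Pinj i). congruence.
      * intros a. exists (nd i a). reflexivity.
      * intros a u v Hu Hv. assert (u = v) as -> by (apply sig_eq; congruence). apply conn_refl.
      * intros a b Hab. exists (nd i a), (nd i b). split; [reflexivity|split; [reflexivity|]].
        unfold E0; simpl. destruct (Htri a b) as [X|[X|X]].
        -- left. apply (proj1 (proj2 (HPs i))); auto.
        -- contradiction.
        -- right. apply (proj1 (proj2 (HPs i))); auto.
    + intros i j Hij.
      assert (Hnsub : exists m, proj1_sig i m /\ ~ proj1_sig j m).
      { apply NNPP. intros HN. apply Hij. apply sig_eq.
        assert (Hs : forall x, proj1_sig i x -> proj1_sig j x).
        { intros x Hx. apply NNPP; intros Hx'. apply HN. eauto. }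
        destruct (proj2_sig i) as [[_ Hmax] _]. destruct (proj2_sig j) as [[Hchj _] _].
        apply functional_extensionality; intros x. apply propositional_extensionality.
        split. apply Hs. apply (Hmax (proj1_sig j)); auto. }
      destruct Hnsub as [m0 [Hm0i Hm0j]].
      destruct (HPs i) as [Pin [Ho Psur]].
      destruct (wf_min ltK WK (fun a => ~ proj1_sig j (Psi i a))) as [a [Ha Hamin]].
      { destruct (Psur m0 Hm0i) as [a0 Ea0]. exists a0. rewrite Ea0. auto. }
      set (m := Psi i a) in *.
      exists (fun v : V0 => lt (proj1_sig v) m). split.
      * destruct (on_level_LD lt ltK m a inh (Plev i a)) as [rho (L1&_&_&L4)].
        apply card_lt_inj with {b | ltK b a}.
        -- exists (fun v => exist (fun b => ltK b a) (rho (proj1_sig (proj1_sig v))) (L1 _ (proj2_sig v))).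
           intros x y E'. apply sig_eq. apply sig_eq. apply L4. apply (proj2_sig x). apply (proj2_sig y).
           exact (f_equal (@proj1_sig _ _) E').
        -- split. apply inj_sub. apply seg_small; auto.
      * intros x y [b Hb] Sx [b' Hb'] Sy Hc.
        assert (cone : forall u w, connected_in E0 (fun w => ~ lt (proj1_sig w) m) u w ->
                  (m = proj1_sig u \/ lt m (proj1_sig u)) -> (m = proj1_sig w \/ lt m (proj1_sig w))).
        { intros u w Huw. induction Huw as [u w [Hu [Hw Huw]]| u | u v w _ IH1 _ IH2].
          - intros Hmu. destruct Huw as [X|X].
            + right. destruct Hmu as [Hmu|Hmu]. rewrite Hmu; auto. eauto.
            + destruct Hmu as [Hmu|Hmu].
              * exfalso. apply Hw. rewrite Hmu. exact X.
              * destruct (proj1 (Tw (proj1_sig u)) (proj1_sig w) m X Hmu) as [Y|[Y|Y]].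
                left; auto. exfalso; auto. right; auto.
          - auto.
          - auto. }
        assert (Hx : m = proj1_sig x \/ lt m (proj1_sig x)).
        { rewrite Hb. unfold m. destruct (Htri a b) as [X|[X|X]].
          - right. apply Ho; auto.
          - left; rewrite X; auto.
          - exfalso. apply Sx. rewrite Hb. apply Ho; auto. }
        specialize (cone _ _ Hc Hx).
        apply Ha. destruct (HPs j) as [Pjn _].
        destruct cone as [Y|Y].
        -- rewrite Y, Hb'. apply Pjn.
        -- apply (branch_down lt (proj1_sig j) (proj1_sig y) m); auto. exact (proj1 (proj2_sig j)).
           rewrite Hb'. apply Pjn.
Qed.

Theorem mainTheorem12 (K : Type) (ltK : K -> K -> Prop) :
  regular_cardinal K ltK ->
  ((exists (T : Type) (lt : T -> T -> Prop), kurepa_tree K ltK T lt) <->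
   (exists (V : Type) (E : V -> V -> Prop),
      simple_graph V E /\ equipotent V K /\ kl_connected K K V E /\
      exists (I : Type) (F : I -> K -> V -> Prop),
        ~ inj_le I K /\ kurepa_minor_family K E I F)).
Proof.
  intros RK. split.
  - intros [T [lt HT]]. exact (forward K ltK T lt RK HT).
  - intros [V [E [Hs [Heq [Hkl [I [F [HI HF]]]]]]]]. exact (backward K ltK V E RK Hs Heq Hkl I F HI HF).
Qed.

Print Assumptions mainTheorem12.
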